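(* Let $t\in((0,1)\cup(1,\infty))\cap\mathbb Q$ be a reduced fraction. Define a word $w$ in the alphabet $\{p,q,r\}$ as follows. If $0<t<1$: for each subword of $\omega_t$ lying between two consecutive occurrences of $z^{\pm1}$, assign the letter $p$ if the subword is of the form $y^{\pm1}$ and the letter $q$ if it is of the form $y^{\pm1}x^{\pm1}y^{\pm1}$; let $w$ be the concatenation of these letters in the order in which the subwords occur in $\omega_t$. If $1<t<\infty$: for each subword of $\omega_t$ lying between two consecutive occurrences of $x^{\pm1}$, assign $q$ if the subword is of the form $y^{\pm1}z^{\pm1}y^{\pm1}$ and $r$ if it is of the form $y^{\pm1}$; let $w$ be the concatenation in order. Then the Cohn word $c_t$ satisfies $c_t=pwq$ if $0<t<1$, and $c_t=qwr$ if $1<t<\infty$.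
   Context: Modified lattice: the planar graph with vertex set $\mathbb Z^2$ whose edges are the horizontal unit segments, the vertical unit segments, and the diagonal segments of slope $-1$ joining $(i,j+1)$ and $(i+1,j)$. Words $\omega_t$: for reduced $t=a/b\in(0,\infty)$, let $L_t$ be the segment from $(0,0)$ to $(b,a)$, oriented from $(0,0)$ to $(b,a)$. List the edges of the modified lattice whose relative interior meets $L_t$, in the order of the intersection points along $L_t$. A horizontal (resp. diagonal, vertical) edge contributes $x$ (resp. $y$, $z$) if its midpoint is not on the right-hand side of $L_t$ (including lying on $L_t$), and $x^{-1}$ (resp. $y^{-1}$, $z^{-1}$) if its midpoint is on the right-hand side. $\omega_t$ is the concatenation of these letters. Cohn word $c_t$ (a word in the free monoid on $\{p,q,r\}$): for reduced $t=a/b\in(0,\infty)$, consider $L_t$ in the ordinary integer grid of $\mathbb R^2$. Each time $L_t$ meets a grid line, take the lattice point adjacent to that intersection on the right-hand side of the oriented segment (if the intersection is itself a lattice point, that lattice point is recorded). Record these lattice points in order as $P_1=(0,0),P_2,\dots,P_n=(b,a)$, discarding repetitions, and join consecutive points by segments. Each segment of slope $0$, $1$, $\infty$ is assigned the letter $p$, $q$, $r$ respectively; $c_t$ is the sequence of these letters in order. (E.g. $c_{2/5}=p^2qpq$ and $c_{5/2}=qrqr^2$.) *)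

(* Defs.v *)
From mathcomp Require Import all_boot all_order all_algebra.
Set Implicit Arguments. Unset Strict Implicit. Unset Printing Implicit Defensive.
Import Order.TTheory GRing.Theory Num.Theory.
Local Open Scope ring_scope.

(* t = a/b reduced, a b positive coprime naturals.  L_t = segment from (0,0)
   to (b,a), i.e. the points s *(b,a), 0 <= s <= 1.  Points are pairs of rats. *)
Definition pt := (rat * rat)%type.
Definition cross (u v : pt) : rat := u.1 * v.2 - u.2 * v.1.
Definition dirL (a b : nat) : pt := (b%:R, a%:R).
Definition on_right (a b : nat) (P : pt) : bool := cross (dirL a b) P < 0.

(* letters x, y, z with exponent: (g, true) = g, (g, false) = g^-1 *)
Inductive gen := gx | gy | gz.
Definition sletter := (gen * bool)%type.

(* edges of the modified lattice:
   EH i j : (i,j)--(i+1,j)     (horizontal, letter x)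
   ED i j : (i,j+1)--(i+1,j)   (diagonal of slope -1, letter y)
   EV i j : (i,j)--(i,j+1)     (vertical, letter z) *)
Inductive ekind := EH | ED | EV.
Definition edge := (ekind * int * int)%type.

Definition edge_ends (e : edge) : pt * pt :=
  let: (k, i, j) := e in
  match k with
  | EH => ((i%:~R, j%:~R), ((i + 1)%:~R, j%:~R))
  | ED => ((i%:~R, (j + 1)%:~R), ((i + 1)%:~R, j%:~R))
  | EV => ((i%:~R, j%:~R), (i%:~R, (j + 1)%:~R))
  end.

Definition edge_vec (e : edge) : pt :=
  let: (P0, P1) := edge_ends e in (P1.1 - P0.1, P1.2 - P0.2).

(* Solving P0 + u (P1 - P0) = s (b,a): u and s below (the edge is never
   parallel to L_t when a, b > 0, so cross (edge_vec e) (dirL a b) <> 0). *)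
Definition edge_u (a b : nat) (e : edge) : rat :=
  - cross (edge_ends e).1 (dirL a b) / cross (edge_vec e) (dirL a b).
Definition edge_s (a b : nat) (e : edge) : rat :=
  cross (edge_ends e).1 (edge_vec e) / cross (dirL a b) (edge_vec e).

(* the relative interior of e meets the segment L_t *)
Definition meets (a b : nat) (e : edge) : bool :=
  [&& cross (edge_vec e) (dirL a b) != 0,
      0 < edge_u a b e < 1 & 0 <= edge_s a b e <= 1].

(* candidate edges: all edges with i in [-1, b], j in [-1, a]; every edge
   whose relative interior meets L_t (contained in [0,b]x[0,a]) is among them *)
Definition idx_range (n : nat) : seq int := [seq (k%:Z - 1)%R | k <- iota 0 n.+3].
Definition cand_edges (a b : nat) : seq edge :=
  [seq (ki.1, ki.2, j) | ki <- [seq (k, i) | k <- [:: EH; ED; EV], i <- idx_range b],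
                         j <- idx_range a].

Definition crossed_edges (a b : nat) : seq edge :=
  sort (fun e1 e2 => edge_s a b e1 <= edge_s a b e2) [seq e <- cand_edges a b | meets a b e].

Definition edge_gen (e : edge) : gen :=
  match e.1.1 with EH => gx | ED => gy | EV => gz end.
Definition edge_mid (e : edge) : pt :=
  let: (P0, P1) := edge_ends e in ((P0.1 + P1.1) / 2, (P0.2 + P1.2) / 2).
Definition edge_letter (a b : nat) (e : edge) : sletter :=
  (edge_gen e, ~~ on_right a b (edge_mid e)).

Definition omega (a b : nat) : seq sletter := map (edge_letter a b) (crossed_edges a b).

Fixpoint split_at (sep : pred sletter) (w : seq sletter) : seq (seq sletter) :=
  match w with
  | [::] => [:: [::]]
  | l :: w' => let r := split_at sep w' in
               if sep l then [::] :: r else (l :: head [::] r) :: behead r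
  end.
Definition between_seps (sep : pred sletter) (w : seq sletter) : seq (seq sletter) :=
  let ps := split_at sep w in take (size ps - 2) (behead ps).

Definition is_gen (g : gen) (l : sletter) : bool :=
  match g, l.1 with gx, gx | gy, gy | gz, gz => true | _, _ => false end.

Inductive cletter := cp | cq | cr.

Fixpoint optseq (A : Type) (s : seq (option A)) : option (seq A) :=
  match s with
  | [::] => Some [::]
  | o :: s' => match o, optseq s' with Some x, Some r => Some (x :: r) | _, _ => None end
  end.

(* the word w of the theorem, case 0 < t < 1 (None if some subword has
   neither of the two forms) *)
Definition chunk_lt (c : seq sletter) : option cletter :=
  match c with
  | [:: (gy, _)] => Some cp
  | [:: (gy, _); (gx, _); (gy, _)] => Some cq
  | _ => None
  end.
Definition w_lt (a b : nat) : option (seq cletter) :=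
  optseq (map chunk_lt (between_seps (is_gen gz) (omega a b))).

Definition chunk_gt (c : seq sletter) : option cletter :=
  match c with
  | [:: (gy, _); (gz, _); (gy, _)] => Some cq
  | [:: (gy, _)] => Some cr
  | _ => None
  end.
Definition w_gt (a b : nat) : option (seq cletter) :=
  optseq (map chunk_gt (between_seps (is_gen gx) (omega a b))).

(* Recorded lattice point for an intersection Q of L_t with a grid line, Q lying
   on the grid line through the lattice points lo and lo + step (step = (0,1) for
   a vertical line, (1,0) for a horizontal one): Q itself if Q is a lattice
   point, otherwise the adjacent lattice point on the right-hand side. *)
Definition ipt := (int * int)%type.
Definition ipt2pt (P : ipt) : pt := (P.1%:~R, P.2%:~R).

Definition vrecord (a b : nat) (i : nat) : rat * ipt :=
  let s : rat := i%:R / b%:R in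
  let y : rat := s * a%:R in
  let fy := Num.floor y in
  if fy%:~R == y then (s, (i%:Z, fy))
  else let lo := (i%:Z, fy) in let hi := (i%:Z, fy + 1) in
       (s, if on_right a b (ipt2pt lo) then lo else hi).
Definition hrecord (a b : nat) (j : nat) : rat * ipt :=
  let s : rat := j%:R / a%:R in
  let x : rat := s * b%:R in
  let fx := Num.floor x in
  if fx%:~R == x then (s, (fx, j%:Z))
  else let lo := (fx, j%:Z) in let hi := (fx + 1, j%:Z) in
       (s, if on_right a b (ipt2pt lo) then lo else hi).

Definition cohn_points (a b : nat) : seq ipt :=
  undup (map snd (sort (fun r1 r2 : rat * ipt => r1.1 <= r2.1)
                       (map (vrecord a b) (iota 0 b.+1) ++ map (hrecord a b) (iota 0 a.+1)))).

Definition seg_letter (P1 P2 : ipt) : option cletter :=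
  let dx := P2.1 - P1.1 in let dy := P2.2 - P1.2 in
  if (dy == 0) && (dx != 0) then Some cp
  else if (dx == dy) && (dx != 0) then Some cq
  else if (dx == 0) && (dy != 0) then Some cr
  else None.

Definition cohn_word (a b : nat) : option (seq cletter) :=
  let P := cohn_points a b in optseq (map (fun pq => seg_letter pq.1 pq.2) (zip P (behead P))).

(* Main.v *)
Set Warnings "-all".
From HB Require Import structures.
Require Import Defs.
From mathcomp Require Import all_boot all_order all_algebra zify ring lra.
Set Implicit Arguments. Unset Strict Implicit. Unset Printing Implicit Defensive.
Import Order.TTheory GRing.Theory Num.Theory.
Local Open Scope ring_scope.
Definition ek_eqb (x y : ekind) := match x, y with EH,EH|ED,ED|EV,EV => true | _,_ => false end.
Lemma ek_eqP : Equality.axiom ek_eqb.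
Proof. by case; case; constructor. Qed.
HB.instance Definition _ := hasDecEq.Build ekind ek_eqP.

Lemma split_ne (sep : pred sletter) v :
  split_at sep v = head [::] (split_at sep v) :: behead (split_at sep v).
Proof. by case: v => //= l v; case: (sep l). Qed.

Lemma split_cat (sep : pred sletter) u v : all (predC sep) u ->
  split_at sep (u ++ v) = (u ++ head [::] (split_at sep v)) :: behead (split_at sep v).
Proof.
elim: u => [|l u IH] //=; first by rewrite -split_ne.
case/andP=> hl hu; rewrite (negbTE hl) IH //.
Qed.

Lemma split_blocks (sep : pred sletter) (z : nat -> sletter) (c : nat -> seq sletter) ks c0 :
  all (predC sep) c0 -> (forall k, k \in ks -> sep (z k) && all (predC sep) (c k)) ->
  split_at sep (c0 ++ flatten [seq z k :: c k | k <- ks]) = c0 :: [seq c k | k <- ks].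
Proof.
elim: ks c0 => [|k ks IH] c0 h0 hk /=; first by rewrite cats0 -{1}[c0]cats0 split_cat //= cats0.
have /andP[hz hc] := hk k (mem_head _ _).
rewrite split_cat //= hz IH //=; first by rewrite cats0.
by move=> k' hk'; apply: hk; rewrite in_cons hk' orbT.
Qed.

Lemma idx_rangeP n (x : int) : (x \in idx_range n) = (-1 <= x <= n%:Z + 1).
Proof.
apply/mapP/idP => [[k]|]; first by rewrite mem_iota => /andP[_ hk] ->; lia.
move=> h; exists (absz (x + 1)); first by rewrite mem_iota; lia.
lia.
Qed.

Lemma idx_range_uniq n : uniq (idx_range n).
Proof.
rewrite map_inj_uniq ?iota_uniq // => x y h; apply/eqP; lia.
Qed.

Lemma mem_cand a b (e : edge) :
  (e \in cand_edges a b) = (e.1.2 \in idx_range b) && (e.2 \in idx_range a).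
Proof.
case: e => [[k i] j].
apply/allpairsP/andP => [[[[k' i'] j'] [h1 h2 e]]|[hi hj]].
  case/allpairsP: h1 => [[k'' i''] [_ h e']].
  by case: e => -> -> ->; case: e' => _ ->.
exists ((k, i), j); split => //; apply/allpairsP; exists (k, i); split => //.
by case: (k) => /=; rewrite !in_cons eqxx ?orbT.
Qed.

Lemma cand_uniq a b : uniq (cand_edges a b).
Proof.
apply: allpairs_uniq.
- apply: allpairs_uniq => //; first exact: idx_range_uniq.
  by move=> [x1 y1] [x2 y2] _ _ /= [-> ->].
- exact: idx_range_uniq.
- by move=> [[x1 y1] z1] [[x2 y2] z2] _ _ /= [-> -> ->].
Qed.
Lemma sorted_inj (T : eqType) (f : T -> rat) l :
  sorted (fun x y => f x < f y) l -> {in l &, injective f}.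
Proof.
have tr : transitive (fun x y : T => f x < f y) by move=> x y z; apply: lt_trans.
elim: l => [|h t IH] //= hs x y.
rewrite path_sortedE // in hs; case/andP: hs => /allP ha hs.
rewrite !in_cons => /orP[/eqP->|hx] /orP[/eqP->|hy] // e.
- by have := ha y hy; rewrite e ltxx.
- by have := ha x hx; rewrite e ltxx.
- exact: IH.
Qed.

Lemma crossed_eq a b (l : seq edge) :
  sorted (fun e1 e2 => edge_s a b e1 < edge_s a b e2) l ->
  (forall e, (e \in cand_edges a b) && meets a b e = (e \in l)) ->
  crossed_edges a b = l.
Proof.
move=> hs hm.
have tr : transitive (fun x y : edge => edge_s a b x < edge_s a b y) by move=> x y z; apply: lt_trans.
have ul : uniq l by apply: sorted_uniq hs => // x; rewrite ltxx.
have hp : perm_eq l [seq e <- cand_edges a b | meets a b e].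
  apply: uniq_perm => //; first by rewrite filter_uniq // cand_uniq.
  by move=> e; rewrite mem_filter andbC hm.
have hinj := sorted_inj hs.
have hsl : sorted (fun e1 e2 => edge_s a b e1 <= edge_s a b e2) l.
  by apply: sub_sorted hs => x y /ltW.
rewrite /crossed_edges.
set le := (fun e1 e2 : edge => edge_s a b e1 <= edge_s a b e2).
have h1 : {in l &, total le} by move=> x y _ _; apply: le_total.
have h2 : {in l & &, transitive le} by move=> x y z _ _ _; apply: le_trans.
have h3 : {in l &, antisymmetric le}.
  by move=> x y hx hy /andP[u v]; apply: hinj => //; apply: le_anti; apply/andP; split.
have E := elimT (@perm_sort_inP _ le l _ h1 h2 h3) hp.
by rewrite -E sorted_sort // => x y z; apply: le_trans.
Qed.
Lemma cohn_abstract (R : seq (rat * ipt)) (idx : rat * ipt -> nat) (Pt : nat -> ipt) N :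
  injective Pt ->
  (forall r, r \in R -> r.2 = Pt (idx r) /\ (idx r <= N)%N) ->
  {in R &, forall r1 r2, r1.1 <= r2.1 -> (idx r1 <= idx r2)%N} ->
  (forall n, (n <= N)%N -> exists2 r, r \in R & idx r = n) ->
  undup (map snd (sort (fun r1 r2 : rat * ipt => r1.1 <= r2.1) R)) = map Pt (iota 0 N.+1).
Proof.
move=> iP h1 h2 h3.
set S := sort _ R.
have memS : S =i R := mem_sort _ R.
have -> : map snd S = map Pt (map idx S).
  by rewrite -map_comp; apply/eq_in_map => r; rewrite memS => /h1 [].
rewrite undup_map_inj //; congr map.
have sS : sorted (fun r1 r2 : rat * ipt => r1.1 <= r2.1) S.
  by apply: sort_sorted => x y; apply: le_total.
have sI : sorted leq (map idx S).
  rewrite sorted_map; apply: (@sub_in_sorted _ [in R] _ _ _ S) sS.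
    by move=> x y hx hy; apply: h2.
  by apply/allP => x; rewrite memS.
apply: (irr_sorted_eq ltn_trans ltnn).
- by rewrite ltn_sorted_uniq_leq undup_uniq (subseq_sorted leq_trans (undup_subseq _)).
- exact: iota_ltn_sorted.
- move=> n; rewrite mem_undup mem_iota add0n ltnS /=; apply/mapP/idP => [[r]|hn].
    by rewrite memS => /h1 [_ h] ->.
  by have [r hr <-] := h3 n hn; exists r; rewrite ?memS.
Qed.
Lemma frac01 (x d : rat) : 0 < d -> (0 < x / d < 1) = (0 < x < d).
Proof. move=> hd; by rewrite ltr_pdivrMr // mul1r pmulr_lgt0 // invr_gt0. Qed.
Lemma frac01c (x d : rat) : 0 < d -> (0 <= x / d <= 1) = (0 <= x <= d).
Proof. move=> hd; by rewrite ler_pdivrMr // mul1r pmulr_lge0 // invr_gt0. Qed.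

Lemma natrZ (n : nat) : (n%:R : rat) = (n%:Z)%:~R.
Proof. by []. Qed.

Lemma sV a b i j : (0 < b)%N -> edge_s a b (EV,i,j) = i%:~R / b%:R.
Proof.
move=> hb; have hB : (0 : rat) < b%:R by rewrite ltr0n.
rewrite /edge_s /cross /edge_vec /=.
rewrite [X in _ / X](_ : _ = (b%:R : rat)); last by ring.
by field; rewrite lt0r_neq0.
Qed.
Lemma sH a b i j : (0 < a)%N -> edge_s a b (EH,i,j) = j%:~R / a%:R.
Proof.
move=> ha; have hA : (0 : rat) < a%:R by rewrite ltr0n.
rewrite /edge_s /cross /edge_vec /=.
rewrite [X in _ / X](_ : _ = - (a%:R : rat)); last by ring.
by field; rewrite lt0r_neq0.
Qed.
Lemma sD a b i j : (0 < a + b)%N -> edge_s a b (ED,i,j) = (i + j + 1)%:~R / (a + b)%:R.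
Proof.
move=> hab; have hA : (0 : rat) < (a + b)%:R by rewrite ltr0n.
rewrite /edge_s /cross /edge_vec /=.
rewrite [X in _ / X](_ : _ = - ((a + b)%:R : rat)); last by rewrite natrD; ring.
rewrite [X in X / _](_ : _ = - ((i + j + 1)%:~R : rat)); last by rewrite !intrD; ring.
by rewrite invrN mulrNN.
Qed.

Lemma meetsV a b i j : (0 < b)%N ->
  meets a b (EV,i,j) = [&& 0 < i*a - j*b, i*a - j*b < b, 0 <= i & i <= b].
Proof.
move=> hb; have hB : (0 : rat) < b%:R by rewrite ltr0n.
rewrite /meets; have -> : edge_s a b (EV, i, j) = i%:~R / b%:R by apply: sV.
rewrite /edge_u /cross /edge_vec /=.
have -> : (i%:~R - i%:~R) * a%:R - ((j + 1)%:~R - j%:~R) * b%:R = - (b%:R : rat).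
  by ring.
rewrite oppr_eq0 (gt_eqF hB) /=.
have -> : - (i%:~R * a%:R - j%:~R * b%:R) / - (b%:R : rat) = (i * a - j * b)%:~R / b%:R.
  by rewrite rmorphB !rmorphM /= invrN mulrNN.
rewrite frac01 // frac01c // natrZ.
by rewrite ltr0z ler0z ltr_int ler_int -andbA.
Qed.

Lemma meetsH a b i j : (0 < a)%N ->
  meets a b (EH,i,j) = [&& 0 < j*b - i*a, j*b - i*a < a, 0 <= j & j <= a].
Proof.
move=> ha; have hA : (0 : rat) < a%:R by rewrite ltr0n.
rewrite /meets; have -> : edge_s a b (EH, i, j) = j%:~R / a%:R by apply: sH.
rewrite /edge_u /cross /edge_vec /=.
have -> : ((i + 1)%:~R - i%:~R) * a%:R - (j%:~R - j%:~R) * b%:R = (a%:R : rat).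
  by ring.
rewrite (gt_eqF hA) /=.
have -> : - (i%:~R * a%:R - j%:~R * b%:R) / (a%:R : rat) = (j * b - i * a)%:~R / a%:R.
  by rewrite rmorphB !rmorphM /= opprB.
rewrite frac01 // frac01c // natrZ.
by rewrite ltr0z ler0z ltr_int ler_int -andbA.
Qed.

Lemma meetsD a b i j : (0 < a)%N -> (0 < b)%N ->
  meets a b (ED,i,j) = [&& 0 < (j+1)*b - i*a, (j+1)*b - i*a < (a + b)%N,
                           0 <= i + j + 1 & i + j + 1 <= (a + b)%N].
Proof.
move=> ha hb; have hA : (0 : rat) < (a + b)%:R by rewrite ltr0n addn_gt0 ha.
rewrite /meets; have -> : edge_s a b (ED, i, j) = (i + j + 1)%:~R / (a + b)%:R by apply: sD; rewrite addn_gt0 ha.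
rewrite /edge_u /cross /edge_vec /=.
have -> : ((i + 1)%:~R - i%:~R) * a%:R - (j%:~R - (j + 1)%:~R) * b%:R = ((a + b)%:R : rat).
  by rewrite natrD; ring.
rewrite (gt_eqF hA) /=.
have -> : - (i%:~R * a%:R - (j + 1)%:~R * b%:R) / ((a + b)%:R : rat) = ((j + 1) * b - i * a)%:~R / (a + b)%:R.
  by rewrite rmorphB !rmorphM /= opprB.
rewrite frac01 // frac01c // natrZ.
by rewrite ltr0z ler0z ltr_int ler_int -andbA.
Qed.

Definition sig (e : edge) : edge :=
  match e with
  | (EV, i, j) => (EH, j, i)
  | (EH, i, j) => (EV, j, i)
  | (ED, i, j) => (ED, j, i)
  end.

Lemma sigK : involutive sig. Proof. by case=> [[[] i j]]. Qed.

Lemma meets_sig a b e : (0 < a)%N -> (0 < b)%N -> meets a b (sig e) = meets b a e.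
Proof.
move=> ha hb; case: e => [[[] i j]] /=.
- by rewrite meetsH // meetsV.
- rewrite !meetsD //; apply/idP/idP; move=> /and4P[h1 h2 h3 h4]; apply/and4P; split; lia.
- by rewrite meetsV // meetsH.
Qed.

Lemma s_sig a b e : (0 < a)%N -> (0 < b)%N -> edge_s a b (sig e) = edge_s b a e.
Proof.
move=> ha hb; case: e => [[[] i j]] /=.
- by rewrite sH // sV.
- by rewrite !sD ?addn_gt0 ?ha ?hb // (addnC a b) (addrC j i).
- by rewrite sV // sH.
Qed.

Lemma cand_sig a b e : (sig e \in cand_edges a b) = (e \in cand_edges b a).
Proof. by case: e => [[[] i j]]; rewrite !mem_cand /= andbC. Qed.
Definition fl (a b k : nat) : nat := (k * a %/ b)%N.
Definition Cc (a b k : nat) : bool := ((fl a b k).+1 * b < k.+1 * a)%N.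
Definition Bk (a b k : nat) : seq edge :=
  if Cc a b k then [:: (ED, k%:Z, (fl a b k)%:Z); (EH, k%:Z, (fl a b k).+1%:Z); (ED, k%:Z, (fl a b k).+1%:Z)]
  else [:: (ED, k%:Z, (fl a b k)%:Z)].
Definition zE (a b k : nat) : edge := (EV, k%:Z, (fl a b k)%:Z).
Definition Dk (a b k : nat) : seq edge := if k == 0%N then Bk a b k else zE a b k :: Bk a b k.
Definition LL (a b : nat) : seq edge := flatten [seq Dk a b k | k <- iota 0 b].

Lemma fl_lo a b k : (0 < b)%N -> (fl a b k * b <= k * a)%N.
Proof. rewrite /fl => hb; nia. Qed.
Lemma fl_hi a b k : (0 < b)%N -> (k * a < fl a b k * b + b)%N.
Proof. rewrite /fl => hb; nia. Qed.
Lemma fl_uniq a b k m : (0 < b)%N -> (m * b <= k * a < m * b + b)%N -> fl a b k = m.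
Proof. rewrite /fl => hb h; nia. Qed.
Lemma fl_strict a b k : coprime a b -> (0 < k < b)%N -> (fl a b k * b < k * a)%N.
Proof.
move=> cab /andP[k0 kb]; have hb : (0 < b)%N by apply: leq_ltn_trans kb.
rewrite ltn_neqAle fl_lo // andbT; apply/negP => /eqP h.
have : (b %| k * a)%N by rewrite dvdn_eq; apply/eqP; exact: h.
rewrite Gauss_dvdl; last by rewrite coprime_sym.
by move/(dvdn_leq k0); rewrite leqNgt kb.
Qed.

Lemma LL_memP a b e : reflect (exists2 k, (k < b)%N & (e \in Bk a b k) || ((0 < k)%N && (e == zE a b k)))
  (e \in LL a b).
Proof.
apply: (iffP flatten_mapP) => [[k hk he]|[k hk he]].
  exists k; first by rewrite mem_iota in hk.
  move: he; rewrite /Dk; have [->|k0] := eqVneq k 0%N => he; first by rewrite he.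
  by move: he; rewrite in_cons lt0n k0 /= orbC.
exists k; first by rewrite mem_iota.
rewrite /Dk; have [k0|k0] := eqVneq k 0%N.
  by move: he; rewrite k0 ltnn andFb orbF.
by move: he; rewrite in_cons lt0n k0 /= orbC.
Qed.
Lemma classify a b e : (0 < a)%N -> (a < b)%N -> coprime a b -> meets a b e -> e \in LL a b.
Proof.
move=> ha hab cab; have hb : (0 < b)%N by apply: ltn_trans hab.
case: e => [[[] i j]].
- rewrite meetsH // => /and4P[h1 h2 h3 h4].
  have i0 : 0 <= i by nia.
  case: i i0 h1 h2 h3 h4 => [k|k] // _; case: j => [n|n] // h1 h2 _ h4.
  have lo := @fl_lo a b k hb; have hi := @fl_hi a b k hb.
  have kb : (k < b)%N by nia.
  have en : n = (fl a b k).+1 by nia.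
  have cc : Cc a b k by rewrite /Cc; nia.
  apply/LL_memP; exists k => //; rewrite /Bk cc en.
  by rewrite !in_cons eqxx !orbT.
- rewrite meetsD // => /and4P[h1 h2 h3 h4].
  have i0 : 0 <= i by nia.
  have j0 : 0 <= j by nia.
  case: i i0 h1 h2 h3 h4 => [k|k] // _; case: j j0 => [n|n] // _ h1 h2 h3 h4.
  have lo := @fl_lo a b k hb; have hi := @fl_hi a b k hb.
  have kb : (k < b)%N by nia.
  apply/LL_memP; exists k => //; rewrite /Bk.
  have [en|en] : n = fl a b k \/ n = (fl a b k).+1 by nia.
    by case: (Cc a b k); rewrite en !in_cons eqxx.
  have cc : Cc a b k by rewrite /Cc; nia.
  by rewrite cc en !in_cons eqxx !orbT.
- rewrite meetsV // => /and4P[h1 h2 h3 h4].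
  case: i h1 h2 h3 h4 => [k|k] // h1 h2 _ h4.
  case: j h1 h2 => [n|n] h1 h2; last first.
    exfalso; move: h2; rewrite NegzE; nia.
  have k0 : (0 < k)%N by nia.
  have kb : (k < b)%N.
    have kb' : (k <= b)%N by lia.
    rewrite ltn_neqAle kb' andbT; apply/eqP => ekb; subst k.
    have : (n < a)%N by nia.
    have : (a < n.+1)%N by nia.
    lia.
  have en : n = fl a b k by symmetry; apply: fl_uniq => //; nia.
  apply/LL_memP; exists k => //; rewrite k0 en eqxx orbT //.
Qed.
Lemma LL_sound a b e : (0 < a)%N -> (a < b)%N -> coprime a b -> e \in LL a b ->
  (e \in cand_edges a b) && meets a b e.
Proof.
move=> ha hab cab; have hb : (0 < b)%N by apply: ltn_trans hab.
rewrite mem_cand.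
case/LL_memP => k kb /orP[he|/andP[k0 /eqP ->]].
  have lo := @fl_lo a b k hb; have hi := @fl_hi a b k hb.
  have fa : (fl a b k < a)%N by nia.
  move: he; rewrite /Bk; case cc: (Cc a b k); rewrite /Cc in cc.
    move=> he; rewrite !in_cons orbF in he; case/or3P: he => /eqP ->;
    rewrite !idx_rangeP ?meetsD ?meetsH //=; rewrite -!andbA; apply/and5P; split; try lia.
  move=> he; rewrite in_cons orbF in he; move/eqP: he => ->.
  rewrite !idx_rangeP ?meetsD //=; rewrite -!andbA; apply/and5P; split; try lia.
have lo := @fl_lo a b k hb; have hi := @fl_hi a b k hb.
have st := @fl_strict a b k cab; rewrite k0 kb in st; have {}st := st isT.
have fa : (fl a b k < a)%N by nia.
rewrite /zE !idx_rangeP ?meetsV //=; rewrite -!andbA; apply/and5P; split; lia.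
Qed.
Lemma ltr_fracZ (X Z : int) (y w : nat) : (0 < y)%N -> (0 < w)%N ->
  ((X%:~R / y%:R : rat) < Z%:~R / w%:R) = (X * w%:Z < Z * y%:Z).
Proof.
move=> hy hw.
rewrite ltr_pdivrMr ?ltr0n // mulrAC ltr_pdivlMr ?ltr0n // !natrZ -!rmorphM /=.
by rewrite ltr_int.
Qed.
Lemma ler_fracZ (X Z : int) (y w : nat) : (0 < y)%N -> (0 < w)%N ->
  ((X%:~R / y%:R : rat) <= Z%:~R / w%:R) = (X * w%:Z <= Z * y%:Z).
Proof.
move=> hy hw.
rewrite ler_pdivrMr ?ltr0n // mulrAC ler_pdivlMr ?ltr0n // !natrZ -!rmorphM /=.
by rewrite ler_int.
Qed.

Lemma all_flatten (T : Type) (p : pred T) (s : seq (seq T)) : all p (flatten s) = all (all p) s.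
Proof. by elim: s => //= x s IH; rewrite all_cat IH. Qed.

Lemma sorted_blocks (T : Type) (key : T -> rat) (D : nat -> seq T) (g : nat -> rat) m n :
  {homo g : i j / (i <= j)%N >-> i <= j} ->
  (forall k, (m <= k < m + n)%N -> sorted (fun x y => key x < key y) (D k) /\
                                 all (fun x => g k <= key x < g k.+1) (D k)) ->
  sorted (fun x y => key x < key y) (flatten [seq D k | k <- iota m n]).
Proof.
move=> hg; elim: n m => [|n IH] m hD //=.
have tr : transitive (fun x y => key x < key y) by move=> x y z; apply: lt_trans.
rewrite sorted_pairwise // pairwise_cat -!sorted_pairwise //.
have hm : (m <= m < m + n.+1)%N by rewrite leqnn addnS ltnS leq_addr.
have [sD aD] := hD m hm.
rewrite sD IH ?andbT; last by move=> k /andP[h1 h2]; apply: hD; apply/andP; split; lia.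
have hr : all (fun y => g m.+1 <= key y) (flatten [seq D k | k <- iota m.+1 n]).
  rewrite all_flatten all_map; apply/allP => k; rewrite mem_iota => /andP[h1 h2] /=.
  have hk : (m <= k < m + n.+1)%N by apply/andP; split; lia.
  have [_ aDk] := hD k hk.
  apply: sub_all aDk => y /andP[h _]; apply: le_trans h; exact: hg.
apply: sub_all aD => x /andP[_ hx']; apply: sub_all hr => y hy.
exact: lt_le_trans hx' hy.
Qed.
Ltac splitall := repeat (apply/andP; split).

Lemma LL_sorted a b : (0 < a)%N -> (a < b)%N -> coprime a b ->
  sorted (fun x y => edge_s a b x < edge_s a b y) (LL a b).
Proof.
move=> ha hab cab; have hb : (0 < b)%N by apply: ltn_trans hab.
have hab' : (0 < a + b)%N by rewrite addn_gt0 ha.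
apply: (@sorted_blocks _ _ _ (fun k => (k%:Z)%:~R / b%:R)).
  by move=> i j hij; rewrite ler_fracZ //; nia.
move=> k /andP[_ kb]; rewrite add0n in kb.
have lo := @fl_lo a b k hb; have hi := @fl_hi a b k hb.
have fa : (fl a b k < a)%N by nia.
rewrite /Dk /Bk /zE /Cc; case: eqP => [k0|/eqP k0]; case: ifP => cc /=;
  rewrite ?sV ?sH ?sD // !ltr_fracZ // !ler_fracZ //; split; splitall; try lia.
all: try (have st := @fl_strict a b k cab; rewrite lt0n k0 kb in st; have {}st := st isT).
all: try lia.
Qed.
Lemma crossed_lt a b : (0 < a)%N -> (a < b)%N -> coprime a b -> crossed_edges a b = LL a b.
Proof.
move=> ha hab cab; apply: crossed_eq; first exact: LL_sorted.
move=> e; apply/idP/idP => [/andP[_ hm]|he]; first exact: classify.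
exact: LL_sound.
Qed.

Lemma crossed_gt a b : (0 < b)%N -> (b < a)%N -> coprime a b ->
  crossed_edges a b = map sig (LL b a).
Proof.
move=> hb hba cab; have ha : (0 < a)%N by apply: ltn_trans hba.
have cba : coprime b a by rewrite coprime_sym.
apply: crossed_eq.
  rewrite sorted_map; apply: sub_sorted (LL_sorted hb hba cba) => x y /=.
  by rewrite !s_sig.
move=> e; have -> : (e \in map sig (LL b a)) = (sig e \in LL b a).
  by rewrite -{1}(sigK e) (mem_map (can_inj sigK)).
rewrite -{1 2}(sigK e) cand_sig meets_sig //.
apply/idP/idP => [/andP[_ hm]|he]; first exact: classify.
exact: LL_sound.
Qed.
Lemma optseq_some (A B : Type) (f : A -> B) s : optseq [seq Some (f x) | x <- s] = Some (map f s).
Proof. by elim: s => //= x s ->. Qed.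

Lemma LL_split a b : (0 < b)%N ->
  LL a b = Bk a b 0 ++ flatten [seq zE a b k :: Bk a b k | k <- iota 1 b.-1].
Proof.
rewrite /LL; case: b => // b _ /=; congr (_ ++ _); congr flatten.
by apply/eq_in_map => k; rewrite mem_iota /Dk => /andP[k0 _]; rewrite eqn0Ngt k0.
Qed.

Lemma between_blocks (sep : pred sletter) (z : nat -> sletter) (c : nat -> seq sletter) n c0 :
  all (predC sep) c0 -> (forall k, sep (z k) && all (predC sep) (c k)) ->
  between_seps sep (c0 ++ flatten [seq z k :: c k | k <- iota 1 n]) = [seq c k | k <- iota 1 n.-1].
Proof.
move=> h0 hk; rewrite /between_seps split_blocks //= ?size_map ?size_iota.
  rewrite -map_take take_iota; congr (map _ (iota _ _)); lia.
Qed.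

Lemma w_lt_val a b : (0 < a)%N -> (a < b)%N -> coprime a b ->
  w_lt a b = Some [seq (if Cc a b k then cq else cp) | k <- iota 1 b.-2].
Proof.
move=> ha hab cab; have hb : (0 < b)%N by apply: ltn_trans hab.
rewrite /w_lt /omega crossed_lt // LL_split // map_cat map_flatten -map_comp.
have -> : [seq (map (edge_letter a b) \o (fun k => zE a b k :: Bk a b k)) i | i <- iota 1 b.-1] =
  [seq edge_letter a b (zE a b k) :: map (edge_letter a b) (Bk a b k) | k <- iota 1 b.-1] by [].
rewrite between_blocks; first last.
- by move=> k; rewrite /Bk; case: (Cc a b k).
- by rewrite /Bk; case: (Cc a b 0).
rewrite -map_comp -optseq_some; congr optseq; apply: eq_map => k /=.
by rewrite /Bk; case: (Cc a b k).
Qed.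

Lemma w_gt_val a b : (0 < b)%N -> (b < a)%N -> coprime a b ->
  w_gt a b = Some [seq (if Cc b a k then cq else cr) | k <- iota 1 a.-2].
Proof.
move=> hb hba cab; have ha : (0 < a)%N by apply: ltn_trans hba.
rewrite /w_gt /omega crossed_gt // LL_split // -map_comp map_cat map_flatten -map_comp.
have -> : [seq (map (edge_letter a b \o sig) \o (fun k => zE b a k :: Bk b a k)) i | i <- iota 1 a.-1] =
  [seq edge_letter a b (sig (zE b a k)) :: map (edge_letter a b \o sig) (Bk b a k) | k <- iota 1 a.-1] by [].
rewrite between_blocks; first last.
- by move=> k; rewrite /Bk; case: (Cc b a k).
- by rewrite /Bk; case: (Cc b a 0).
rewrite -map_comp -optseq_some; congr optseq; apply: eq_map => k /=.
by rewrite /Bk; case: (Cc b a k).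
Qed.
Lemma floor_frac (n d : nat) : (0 < d)%N -> Num.floor (n%:R / d%:R : rat) = (n %/ d)%:Z.
Proof.
move=> hd; have hD : (0 : rat) < d%:R by rewrite ltr0n.
apply: Num.Theory.floor_def; rewrite intrD.
rewrite ler_pdivlMr // ltr_pdivrMr //.
have -> : (((n %/ d)%N%:Z)%:~R : rat) = (n %/ d)%:R by [].
rewrite -natrM ler_nat -[1]/(1%:R : rat) -natrD -natrM ltr_nat.
apply/andP; split; nia.
Qed.

Lemma divtest (n d : nat) : (0 < d)%N ->
  ((((n %/ d)%N%:Z)%:~R : rat) == n%:R / d%:R) = (d %| n)%N.
Proof.
move=> hd; have hD : (0 : rat) < d%:R by rewrite ltr0n.
have -> : (((n %/ d)%N%:Z)%:~R : rat) = (n %/ d)%:R by [].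
rewrite dvdn_eq; apply/eqP/eqP => h.
  apply/eqP; rewrite -(eqr_nat rat) natrM h; apply/eqP; field; exact: lt0r_neq0.
by rewrite -{2}h natrM; field; exact: lt0r_neq0.
Qed.

Lemma on_right_eq a b (x y : int) : on_right a b (ipt2pt (x, y)) = (b%:Z * y < a%:Z * x).
Proof.
rewrite /on_right /cross /dirL /ipt2pt /= subr_lt0 !natrZ -!rmorphM /=.
by rewrite ltr_int.
Qed.

Lemma vrecord_val a b i : (0 < b)%N -> coprime a b -> (i <= b)%N ->
  vrecord a b i = (i%:R / b%:R, (i%:Z, (fl a b i)%:Z)).
Proof.
move=> hb cab ib; rewrite /vrecord.
have -> : (i%:R / b%:R * a%:R : rat) = (i * a)%:R / b%:R by rewrite mulrAC -natrM.
rewrite floor_frac // divtest //.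
case: ifP => // hdiv; rewrite on_right_eq ifT //.
have i0 : (0 < i)%N by case: (i) hdiv => //; rewrite mul0n dvdn0.
have ib' : (i < b)%N.
  rewrite ltn_neqAle ib andbT; apply/negP => /eqP ei; move: hdiv; rewrite ei.
  by rewrite dvdn_mulr.
have := @fl_strict a b i cab; rewrite i0 ib' /fl => /(_ isT) h.
lia.
Qed.

Lemma hrecord_val a b j : (0 < a)%N ->
  hrecord a b j = (j%:R / a%:R,
    if (a %| j * b)%N then ((j * b %/ a)%N%:Z, j%:Z) else ((j * b %/ a)%N%:Z + 1, j%:Z)).
Proof.
move=> ha; rewrite /hrecord.
have -> : (j%:R / a%:R * b%:R : rat) = (j * b)%:R / a%:R by rewrite mulrAC -natrM.
rewrite floor_frac // divtest //.
case: ifP => // hdiv; rewrite on_right_eq ifF //.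
have : ((j * b %/ a) * a <= j * b)%N by nia.
lia.
Qed.
Lemma coprime_div_cases a b j : (0 < a)%N -> coprime a b -> (j <= a)%N -> (a %| j * b)%N ->
  j = 0%N \/ j = a.
Proof.
move=> ha cab ja; rewrite Gauss_dvdl // => hd.
case: (posnP j) => [->|j0]; [by left | right].
by apply/eqP; rewrite eqn_leq ja (dvdn_leq j0 hd).
Qed.

Lemma nat_bounds (n X d : nat) : (0 < d)%N ->
  ((n%:R - 1 < (X%:R / d%:R : rat)) = (n * d < X + d)%N) /\
  (((X%:R / d%:R : rat) <= n%:R) = (X <= n * d)%N).
Proof.
move=> hd; have hD : (0 : rat) < d%:R by rewrite ltr0n.
split.
  rewrite ltr_pdivlMr // -(ltrD2r (d%:R)) -natrD -[X in (_ - 1) * _ + X]mul1r.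
  rewrite -mulrDl subrK -natrM ltr_nat //.
by rewrite ler_pdivrMr // -natrM ler_nat.
Qed.

Definition Ptlt (a b n : nat) : ipt := (n%:Z, (fl a b n)%:Z).

Lemma rec_ok_lt a b r : (0 < a)%N -> (a < b)%N -> coprime a b ->
  r \in [seq vrecord a b i | i <- iota 0 b.+1] ++ [seq hrecord a b j | j <- iota 0 a.+1] ->
  [/\ r.2 = Ptlt a b (absz r.2.1), (absz r.2.1 <= b)%N &
      (absz r.2.1)%:R - 1 < b%:R * r.1 <= (absz r.2.1)%:R].
Proof.
move=> ha hab cab; have hb : (0 < b)%N by apply: ltn_trans hab.
have hB : (0 : rat) < b%:R by rewrite ltr0n.
rewrite mem_cat => /orP[] /mapP [k]; rewrite mem_iota add0n ltnS => /andP[_ hk] ->.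
  rewrite vrecord_val //=; split => //.
  rewrite mulrC divfK ?lt0r_neq0 //; apply/andP; split => //; lra.
rewrite hrecord_val //=; case: ifP => hdiv /=.
  have [->|->] := coprime_div_cases ha cab hk hdiv.
    split; [by rewrite /Ptlt /fl !mul0n !div0n | by rewrite mul0n div0n | rewrite mul0r mulr0 mul0n div0n; lra].
  rewrite mulKn // divff ?lt0r_neq0 ?ltr0n // mulr1.
  split; [by rewrite /Ptlt /fl mulKn | by [] | lra].
set g := (k * b %/ a)%N.
have lo : (g * a <= k * b)%N by rewrite /g; nia.
have hi : (k * b < g * a + a)%N by rewrite /g; nia.
have st : (g * a != k * b)%N.
  apply/negP => /eqP h; move: hdiv; rewrite dvdn_eq /g; move/negP; apply; apply/eqP; exact: h.
split.
- rewrite /Ptlt; congr (_, _); congr Posz; symmetry; apply: fl_uniq => //; nia.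
- rewrite -/g; nia.
- rewrite -/g mulrC mulrAC -natrM; have [h1 h2] := nat_bounds (g + 1) (k * b) ha.
  rewrite h1 h2; apply/andP; split; nia.
Qed.
Lemma mono_bounds (B : rat) (n1 n2 : nat) (s1 s2 : rat) : 0 < B ->
  n1%:R - 1 < B * s1 -> B * s2 <= n2%:R -> s1 <= s2 -> (n1 <= n2)%N.
Proof.
move=> hB h1 h2 h12.
have h3 : B * s1 <= B * s2 by rewrite ler_pM2l.
have h : (n1%:R : rat) < (n2.+1)%:R by rewrite -addn1 natrD; lra.
by rewrite ltr_nat ltnS in h.
Qed.

Lemma cohn_points_lt a b : (0 < a)%N -> (a < b)%N -> coprime a b ->
  cohn_points a b = map (Ptlt a b) (iota 0 b.+1).
Proof.
move=> ha hab cab; have hb : (0 < b)%N by apply: ltn_trans hab.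
have hB : (0 : rat) < b%:R by rewrite ltr0n.
rewrite /cohn_points; apply: (@cohn_abstract _ (fun r => absz r.2.1)).
- by move=> m n [].
- by move=> r hr; have [h1 h2 _] := rec_ok_lt ha hab cab hr.
- move=> r1 r2 hr1 hr2 h12.
  have [_ _ /andP[l1 _]] := rec_ok_lt ha hab cab hr1.
  have [_ _ /andP[_ u2]] := rec_ok_lt ha hab cab hr2.
  exact: mono_bounds hB l1 u2 h12.
- move=> n hn; exists (vrecord a b n); last by rewrite vrecord_val.
  by rewrite mem_cat; apply/orP; left; apply: map_f; rewrite mem_iota.
Qed.
Lemma zip_pts (T : Type) (P : nat -> T) m n :
  zip (map P (iota m n.+1)) (behead (map P (iota m n.+1))) = map (fun k => (P k, P k.+1)) (iota m n).
Proof. by elim: n m => [|n IH] m //=; rewrite -IH. Qed.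

Lemma iota_rcons m n : iota m n.+1 = rcons (iota m n) (m + n).
Proof. by rewrite -addn1 iotaD cats1. Qed.

Lemma fl_step a b k : (0 < b)%N -> (a < b)%N ->
  fl a b k.+1 = fl a b k \/ fl a b k.+1 = (fl a b k).+1.
Proof.
move=> hb hab; have := @fl_lo a b k hb; have := @fl_hi a b k hb.
have := @fl_lo a b k.+1 hb; have := @fl_hi a b k.+1 hb; nia.
Qed.

Definition Ltl (a b k : nat) : cletter := if fl a b k.+1 == fl a b k then cp else cq.

Lemma cohn_word_lt a b : (0 < a)%N -> (a < b)%N -> coprime a b ->
  cohn_word a b = Some (map (Ltl a b) (iota 0 b)).
Proof.
move=> ha hab cab; have hb : (0 < b)%N by apply: ltn_trans hab.
rewrite /cohn_word cohn_points_lt // zip_pts -map_comp -optseq_some; congr optseq.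
apply: eq_map => k /=; rewrite /seg_letter /Ptlt /Ltl /=.
have -> : (k.+1%:Z - k%:Z) = 1 by lia.
have [e|e] := fl_step k hb hab; rewrite e.
  by rewrite subrr eqxx.
have -> : ((fl a b k).+1%:Z - (fl a b k)%:Z) = 1 by lia.
by rewrite eqn_leq ltnn.
Qed.
Lemma main_lt a b : (0 < a)%N -> (a < b)%N -> coprime a b ->
  exists w, w_lt a b = Some w /\ cohn_word a b = Some (cp :: rcons w cq).
Proof.
move=> ha hab cab; have hb : (0 < b)%N by apply: ltn_trans hab.
exists [seq (if Cc a b k then cq else cp) | k <- iota 1 b.-2]; split; first exact: w_lt_val.
rewrite cohn_word_lt //; congr Some.
have [c ec] : exists c, b = c.+2 by exists b.-2; lia.
have E : iota 0 c.+2 = 0%N :: rcons (iota 1 c) (1 + c) by rewrite -iota_rcons.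
have -> : b.-2 = c by rewrite ec.
rewrite ec E map_cons map_rcons; congr (_ :: rcons _ _).
- rewrite /Ltl /fl mul0n div0n mul1n divn_small ?eqxx //; lia.
- apply/eq_in_map => k; rewrite mem_iota => /andP[k1 kc].
  have hb' : (0 < c.+2)%N by [].
  have lo := @fl_lo a c.+2 k hb'; have hi := @fl_hi a c.+2 k hb'.
  have lo1 := @fl_lo a c.+2 k.+1 hb'; have hi1 := @fl_hi a c.+2 k.+1 hb'.
  have st := @fl_strict a c.+2 k.+1; rewrite -ec in st.
  have {}st := st cab; rewrite ec ltnS in st; have {}st := st (ltac:(lia)).
  rewrite /Ltl /Cc; case: ifP => h; [rewrite ifF|rewrite ifT] => //; apply/eqP; nia.
- have hb' : (0 < c.+2)%N by [].
  have lo1 := @fl_lo a c.+2 c.+1 hb'; have hi1 := @fl_hi a c.+2 c.+1 hb'.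
  rewrite /Ltl; have -> : fl a c.+2 c.+2 = a by rewrite /fl mulKn.
  rewrite ifF //; apply/eqP; have e1 : ((1 + c)%R : nat) = c.+1 by []; rewrite e1; nia.
Qed.
Definition cz (a b n : nat) : nat := if (a %| n * b)%N then (n * b %/ a)%N else (n * b %/ a).+1.
Definition Ptgt (a b n : nat) : ipt := ((cz a b n)%:Z, n%:Z).

Lemma cz_bounds a b n : (0 < a)%N -> (n * b <= cz a b n * a < n * b + a)%N.
Proof.
move=> ha; rewrite /cz; case: ifP => h.
  move: h; rewrite dvdn_eq => /eqP h; rewrite h; lia.
have lo : ((n * b %/ a) * a <= n * b)%N by nia.
have hi : (n * b < (n * b %/ a) * a + a)%N by nia.
have st : ((n * b %/ a) * a != n * b)%N.
  apply/negP => /eqP e; move: h; rewrite dvdn_eq e eqxx //.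
apply/andP; split; nia.
Qed.

Lemma cz_uniq a b n m : (0 < a)%N -> (n * b <= m * a < n * b + a)%N -> cz a b n = m.
Proof. move=> ha h; have := cz_bounds b n ha; nia. Qed.

Lemma floor_bounds (n X d : nat) : (0 < d)%N ->
  (((n%:R : rat) <= X%:R / d%:R) = (n * d <= X)%N) /\
  (((X%:R / d%:R : rat) < n%:R + 1) = (X < n * d + d)%N).
Proof.
move=> hd; have hD : (0 : rat) < d%:R by rewrite ltr0n.
split; first by rewrite ler_pdivlMr // -natrM ler_nat.
rewrite ltr_pdivrMr // mulrDl mul1r -natrM -natrD ltr_nat //.
Qed.

Lemma rec_ok_gt a b r : (0 < b)%N -> (b < a)%N -> coprime a b ->
  r \in [seq vrecord a b i | i <- iota 0 b.+1] ++ [seq hrecord a b j | j <- iota 0 a.+1] ->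
  [/\ r.2 = Ptgt a b (absz r.2.2), (absz r.2.2 <= a)%N &
      (absz r.2.2)%:R <= a%:R * r.1 < (absz r.2.2)%:R + 1].
Proof.
move=> hb hba cab; have ha : (0 < a)%N by apply: ltn_trans hba.
have hA : (0 : rat) < a%:R by rewrite ltr0n.
rewrite mem_cat => /orP[] /mapP [k]; rewrite mem_iota add0n ltnS => /andP[_ hk] ->.
  rewrite vrecord_val //=.
  have lo := @fl_lo a b k hb; have hi := @fl_hi a b k hb.
  split.
  - rewrite /Ptgt; congr (_, _); congr Posz; symmetry; apply: cz_uniq => //.
    case: (posnP k) => [k0|k0]; first by rewrite k0 /fl in lo hi *; nia.
    case: (ltngtP k b) hk => // [kb|->] _; last by rewrite /fl mulKn //; nia.
    have st := @fl_strict a b k cab; rewrite k0 kb in st; have {}st := st isT.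
    nia.
  - nia.
  - rewrite mulrC mulrAC -natrM; have [h1 h2] := floor_bounds (fl a b k) (k * a) hb.
    by rewrite h1 h2; apply/andP; split; nia.
rewrite hrecord_val //=; case: ifP => h /=; (split => //;
  [by rewrite /Ptgt /cz h; try (congr (_, _); lia) | rewrite mulrC divfK ?lt0r_neq0 //; apply/andP; split => //; lra]).
Qed.
Lemma mono_bounds2 (B : rat) (n1 n2 : nat) (s1 s2 : rat) : 0 < B ->
  n1%:R <= B * s1 -> B * s2 < n2%:R + 1 -> s1 <= s2 -> (n1 <= n2)%N.
Proof.
move=> hB h1 h2 h12.
have h3 : B * s1 <= B * s2 by rewrite ler_pM2l.
have h : (n1%:R : rat) < (n2.+1)%:R by rewrite -addn1 natrD; lra.
by rewrite ltr_nat ltnS in h.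
Qed.

Lemma cohn_points_gt a b : (0 < b)%N -> (b < a)%N -> coprime a b ->
  cohn_points a b = map (Ptgt a b) (iota 0 a.+1).
Proof.
move=> hb hba cab; have ha : (0 < a)%N by apply: ltn_trans hba.
have hA : (0 : rat) < a%:R by rewrite ltr0n.
rewrite /cohn_points; apply: (@cohn_abstract _ (fun r => absz r.2.2)).
- by move=> m n [].
- by move=> r hr; have [h1 h2 _] := rec_ok_gt hb hba cab hr.
- move=> r1 r2 hr1 hr2 h12.
  have [_ _ /andP[l1 _]] := rec_ok_gt hb hba cab hr1.
  have [_ _ /andP[_ u2]] := rec_ok_gt hb hba cab hr2.
  exact: mono_bounds2 hA l1 u2 h12.
- move=> n hn; exists (hrecord a b n); last by rewrite hrecord_val //=; case: ifP.
  by rewrite mem_cat; apply/orP; right; apply: map_f; rewrite mem_iota.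
Qed.

Lemma cz_step a b k : (0 < a)%N -> (b < a)%N ->
  cz a b k.+1 = cz a b k \/ cz a b k.+1 = (cz a b k).+1.
Proof.
move=> ha hba; have := @cz_bounds a b k ha; have := @cz_bounds a b k.+1 ha; nia.
Qed.

Definition Ltg (a b k : nat) : cletter := if cz a b k.+1 == cz a b k then cr else cq.

Lemma cohn_word_gt a b : (0 < b)%N -> (b < a)%N -> coprime a b ->
  cohn_word a b = Some (map (Ltg a b) (iota 0 a)).
Proof.
move=> hb hba cab; have ha : (0 < a)%N by apply: ltn_trans hba.
rewrite /cohn_word cohn_points_gt // zip_pts -map_comp -optseq_some; congr optseq.
apply: eq_map => k /=; rewrite /seg_letter /Ptgt /Ltg /=.
have -> : (k.+1%:Z - k%:Z) = 1 by lia.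
have [e|e] := cz_step k ha hba; rewrite e.
  by rewrite subrr eqxx.
have -> : ((cz a b k).+1%:Z - (cz a b k)%:Z) = 1 by lia.
by rewrite eqn_leq ltnn.
Qed.

Lemma main_gt a b : (0 < b)%N -> (b < a)%N -> coprime a b ->
  exists w, w_gt a b = Some w /\ cohn_word a b = Some (cq :: rcons w cr).
Proof.
move=> hb hba cab; have ha : (0 < a)%N by apply: ltn_trans hba.
have cba : coprime b a by rewrite coprime_sym.
exists [seq (if Cc b a k then cq else cr) | k <- iota 1 a.-2]; split; first exact: w_gt_val.
rewrite cohn_word_gt //; congr Some.
have [c ec] : exists c, a = c.+2 by exists a.-2; lia.
have E : iota 0 c.+2 = 0%N :: rcons (iota 1 c) (1 + c) by rewrite -iota_rcons.
have -> : a.-2 = c by rewrite ec.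
have ha' : (0 < c.+2)%N by [].
rewrite ec E map_cons map_rcons; rewrite ec in hba cab cba ha; congr (_ :: rcons _ _).
- have := @cz_bounds c.+2 b 0 ha'; have := @cz_bounds c.+2 b 1 ha'.
  rewrite /Ltg => h1 h0; rewrite ifF //; apply/eqP.
  have -> : cz c.+2 b 0 = 0%N by apply: cz_uniq => //; lia.
  by move=> e; rewrite e in h1; lia.
- apply/eq_in_map => k; rewrite mem_iota => /andP[k1 kc].
  have lo := @fl_lo b c.+2 k ha'; have hi := @fl_hi b c.+2 k ha'.
  have lo1 := @fl_lo b c.+2 k.+1 ha'; have hi1 := @fl_hi b c.+2 k.+1 ha'.
  have st := @fl_strict b c.+2 k.+1 cba; rewrite ltnS in st; have {}st := st (ltac:(lia)).
  have st0 := @fl_strict b c.+2 k cba; have {}st0 := st0 (ltac:(lia)).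
  have z1 := @cz_bounds c.+2 b k ha'; have z2 := @cz_bounds c.+2 b k.+1 ha'.
  have e0 : cz c.+2 b k = (fl b c.+2 k).+1 by apply: cz_uniq => //; rewrite /fl in lo hi st0 *; nia.
  have e1 : cz c.+2 b k.+1 = (fl b c.+2 k.+1).+1 by apply: cz_uniq => //; rewrite /fl in lo1 hi1 st *; nia.
  rewrite /Ltg /Cc e0 e1; case: ifP => h; [rewrite ifF|rewrite ifT] => //; apply/eqP; nia.
- have := @cz_bounds c.+2 b c.+1 ha'; have := @cz_bounds c.+2 b c.+2 ha'.
  have e1 : ((1 + c)%R : nat) = c.+1 by [].
  rewrite /Ltg e1 => h1 h0; rewrite ifT //; apply/eqP.
  have -> : cz c.+2 b c.+2 = b by apply: cz_uniq => //; nia.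
  by apply/esym/cz_uniq => //; nia.
Qed.

Theorem theorem4p7 (a b : nat) (ha : (0 < a)%N) (hb : (0 < b)%N) (hab : coprime a b)
    (hne : a != b) :
  ((a < b)%N -> exists w, w_lt a b = Some w /\ cohn_word a b = Some (cp :: rcons w cq)) /\
  ((b < a)%N -> exists w, w_gt a b = Some w /\ cohn_word a b = Some (cq :: rcons w cr)).
Proof.
split => h; first exact: main_lt.
exact: main_gt.
Qed.
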